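(* Let $P,Q\in W^{(l)}\setminus\{0\}$. (1) If $w(P)$ and $w(Q)$ are not aligned, then $[P,Q]\neq0$ and $w([P,Q])=w(P)+w(Q)-(1,1)$. (2) If $\overline w(P)$ and $\overline w(Q)$ are not aligned, then $[P,Q]\ne0$ and $\overline w([P,Q])=\overline w(P)+\overline w(Q)-(1,1)$.
   Context: $K$ is a field of characteristic zero, $l\in\mathbb{N}$. $W^{(l)}$ is the associative $K$-algebra with $K$-basis $\{X^{i/l}Y^j:i\in\mathbb{Z},j\in\mathbb{N}_0\}$, powers of $X$ multiplying as Laurent monomials and $[Y,X^\alpha]=\alpha X^{\alpha-1}$ for $\alpha\in\frac1l\mathbb{Z}$. $\mathrm{Supp}(P)$ is the set of $(i/l,j)$ such that $X^{i/l}Y^j$ has nonzero coefficient in $P$. $w(P)$: among the points $(a,b)\in\mathrm{Supp}(P)$ maximizing $a-b$, the one with largest $a$; $\overline w(P)$: among the points maximizing $b-a$, the one with largest $b$. Two vectors $(a_1,a_2),(b_1,b_2)$ are aligned if $a_1b_2-a_2b_1=0$. *)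

(* Defs.v *)
From HB Require Import structures.
From mathcomp Require Import all_boot all_order all_algebra.
Set Implicit Arguments. Unset Strict Implicit. Unset Printing Implicit Defensive.
Import Order.TTheory GRing.Theory Num.Theory.
Local Open Scope ring_scope.

(* A monomial X^(i/l) Y^j is indexed by
   (i, j) : int * nat.  An element of W^(l) is presented as a formal finite
   sum of terms (coefficient, monomial); two presentations denote the same
   element iff they have the same coefficient function [coefW]. *)
Definition mon := (int * nat)%type.
Definition Wl (K : fieldType) := seq (K * mon).

Section W.
Variables (K : fieldType) (l : nat).

Definition coefW (P : Wl K) (m : mon) : K := \sum_(x <- P | x.2 == m) x.1.

Definition expK (i : int) : K := (i%:~R) / (l%:R).

Definition ffK (a : K) (t : nat) : K := \prod_(s < t) (a - s%:R).

(* X^a Y^j * X^b Y^k = sum_t C(j,t) b^(t falling) X^(a+b-t) Y^(j+k-t),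
   the normal ordering consequence of [Y, X^b] = b X^(b-1). *)
Definition mulT (x y : K * mon) : Wl K :=
  let: (c, (i, j)) := x in let: (d, (i', k)) := y in
  [seq (c * d * ('C(j, t))%:R * ffK (expK i') t,
        (i + i' - (t * l)%:Z, (j + k - t)%N)) | t <- iota 0 j.+1].

Definition mulW (P Q : Wl K) : Wl K := flatten [seq mulT x y | x <- P, y <- Q].

Definition oppW (P : Wl K) : Wl K := [seq (- x.1, x.2) | x <- P].

Definition commW (P Q : Wl K) : Wl K := mulW P Q ++ oppW (mulW Q P).

Definition zeroW (P : Wl K) : Prop := forall m, coefW P m = 0.

Definition pt (m : mon) : rat * rat := ((m.1)%:~R / (l%:R), (m.2)%:R).

Definition inSupp (P : Wl K) (p : rat * rat) : Prop :=
  exists m, coefW P m != 0 /\ pt m = p.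

Definition is_w (P : Wl K) (p : rat * rat) : Prop :=
  inSupp P p /\
  forall q, inSupp P q ->
    (q.1 - q.2 < p.1 - p.2) || ((q.1 - q.2 == p.1 - p.2) && (q.1 <= p.1)).

Definition is_wbar (P : Wl K) (p : rat * rat) : Prop :=
  inSupp P p /\
  forall q, inSupp P q ->
    (q.2 - q.1 < p.2 - p.1) || ((q.2 - q.1 == p.2 - p.1) && (q.2 <= p.2)).

End W.

Definition aligned (a b : rat * rat) : Prop := a.1 * b.2 - a.2 * b.1 = 0.

Definition addpt (a b : rat * rat) : rat * rat := (a.1 + b.1, a.2 + b.2).
Definition subpt (a b : rat * rat) : rat * rat := (a.1 - b.1, a.2 - b.2).

(* Main.v *)
Require Import Defs.
From mathcomp Require Import all_boot all_order all_algebra.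
From mathcomp Require Import ring lra.
Import Order.TTheory GRing.Theory Num.Theory.
Local Open Scope ring_scope.
Section S.
Variables (K : fieldType) (l : nat).
Lemma coefW_cat (s1 s2 : Wl K) m : coefW (s1 ++ s2) m = coefW s1 m + coefW s2 m.
Proof. by rewrite /coefW big_cat. Qed.
Lemma coefW_opp (s : Wl K) m : coefW (oppW s) m = - coefW s m.
Proof. by rewrite /coefW /oppW big_map sumrN. Qed.
Lemma coefW_cons x (s : Wl K) m : coefW (x :: s) m = (if x.2 == m then x.1 else 0) + coefW s m.
Proof. by rewrite /coefW big_cons; case: ifP; rewrite ?add0r. Qed.
Lemma coefW_flatten (ss : seq (Wl K)) m : coefW (flatten ss) m = \sum_(s <- ss) coefW s m.
Proof. by rewrite /coefW big_flatten. Qed.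
Definition cT (m1 m2 m : mon) : K := coefW (mulT l (1, m1) (1, m2)) m.
Lemma coefW_mulT c d m1 m2 m : coefW (mulT l (c, m1) (d, m2)) m = c * d * cT m1 m2 m.
Proof.
case: m1 m2 => i j [i' k]; rewrite /cT /mulT /coefW !big_map mulr_sumr.
by apply: eq_bigr => t _ /=; rewrite !mul1r !mulrA.
Qed.
Lemma coefW_mulW (P Q : Wl K) m : coefW (mulW l P Q) m =
  \sum_(x <- P) \sum_(y <- Q) x.1 * y.1 * cT x.2 y.2 m.
Proof.
rewrite /mulW coefW_flatten.
elim: P => [|x P IH]; first by rewrite !big_nil.
rewrite /= big_cat big_cons IH; congr (_ + _).
rewrite big_map; apply: eq_bigr => y _.
by case: x y => c m1 [d m2]; rewrite coefW_mulT.
Qed.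
Lemma regroup (P : Wl K) (F : mon -> K) (S : seq mon) : uniq S ->
  {subset [seq x.2 | x <- P] <= S} ->
  \sum_(x <- P) x.1 * F x.2 = \sum_(m1 <- S) coefW P m1 * F m1.
Proof.
move=> uS; elim: P => [|x P IH] sub.
  by rewrite big_nil big1 // => m1 _; rewrite /coefW big_nil mul0r.
rewrite big_cons IH; last by move=> y hy; apply: sub; rewrite /= inE hy orbT.
have xS : x.2 \in S by apply: sub; rewrite /= inE eqxx.
under [RHS]eq_bigr => m1 _ do rewrite coefW_cons mulrDl.
rewrite big_split /=; congr (_ + _).
rewrite (bigD1_seq x.2) //= eqxx big1 ?addr0 // => m1 /negbTE h.
by rewrite eq_sym h mul0r.
Qed.
Definition br m1 m2 m := cT m1 m2 m - cT m2 m1 m.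
Lemma coefW_comm (P Q : Wl K) m : coefW (commW l P Q) m =
  \sum_(m1 <- undup [seq x.2 | x <- P]) coefW P m1 *
    \sum_(m2 <- undup [seq x.2 | x <- Q]) coefW Q m2 * br m1 m2 m.
Proof.
rewrite /commW coefW_cat coefW_opp !coefW_mulW [X in _ - X]exchange_big.
rewrite -sumrB.
transitivity (\sum_(x <- P) x.1 * \sum_(y <- Q) y.1 * br x.2 y.2 m).
  apply: eq_bigr => x _; rewrite -sumrB mulr_sumr; apply: eq_bigr => y _.
  by rewrite /br; ring.
rewrite (regroup P (fun m1 => \sum_(y <- Q) y.1 * br m1 y.2 m) (undup [seq x.2 | x <- P])) ?undup_uniq //; last first.
  by move=> z; rewrite mem_undup.
apply: eq_bigr => m1 _; congr (_ * _).
by rewrite (regroup Q (fun m2 => br m1 m2 m) (undup [seq x.2 | x <- Q])) ?undup_uniq // => z; rewrite mem_undup.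
Qed.
Hypothesis l_gt0 : (0 < l)%N.
Lemma monE (i : int) (j : nat) t t' :
  ((i - (t' * l)%N%:Z, (j - t')%N) == (i - (t * l)%N%:Z, (j - t)%N)) = (t' == t).
Proof.
apply/idP/eqP => [/eqP [] h _|->]; last by rewrite eqxx.
have /eqP : (t' * l)%N%:Z = (t * l)%N%:Z by apply: oppr_inj; apply: (addrI i).
by rewrite eqz_nat eqn_pmul2r // => /eqP.
Qed.
Lemma cT_val m1 m2 t :
  cT m1 m2 (m1.1 + m2.1 - (t * l)%N%:Z, (m1.2 + m2.2 - t)%N) =
  'C(m1.2, t)%:R * ffK (expK K l m2.1) t.
Proof.
case: m1 m2 => i j [i' k]; rewrite /cT /mulT /coefW big_map big_mkcond.
case: (ltnP t j.+1) => ht.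
  have tin : t \in iota 0 j.+1 by rewrite mem_iota.
  rewrite (bigD1_seq t tin (iota_uniq _ _)) /= eqxx !mul1r big1 ?addr0 //.
  by move=> t' /negbTE h; rewrite monE h.
rewrite bin_small // mul0r big1_seq // => t' /andP [_]; rewrite mem_iota add0n => h.
by rewrite monE; case: eqP => // e; move: h; rewrite e ltnNge ht.
Qed.
Lemma cT_spec m1 m2 m : cT m1 m2 m != 0 ->
  exists t, (t <= m1.2)%N /\ m = (m1.1 + m2.1 - (t * l)%N%:Z, (m1.2 + m2.2 - t)%N).
Proof.
case: m1 m2 => i j [i' k]; rewrite /cT /mulT /coefW big_map /=.
case hh: (has (fun t : nat => (i + i' - (t * l)%N%:Z, (j + k - t)%N) == m) (iota 0 j.+1)).
  move/hasP: hh => [t]; rewrite mem_iota add0n ltnS => ht /eqP <- _.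
  by exists t.
move/hasPn: hh => hh; rewrite big1_seq ?eqxx // => t /andP [] /= h1 h2.
by move: (hh t h2); rewrite h1.
Qed.
Lemma ffK0 (a : K) : ffK a 0 = 1. Proof. by rewrite /ffK big_ord0. Qed.
Lemma ffK1 (a : K) : ffK a 1 = a. Proof. by rewrite /ffK big_ord1 subr0. Qed.
Lemma br_spec m1 m2 m : br m1 m2 m != 0 ->
  exists t, [/\ (1 <= t)%N, (t <= m1.2 + m2.2)%N &
     m = (m1.1 + m2.1 - (t * l)%N%:Z, (m1.2 + m2.2 - t)%N)].
Proof.
move=> h.
have [t [ht e]] : exists t, (t <= m1.2 + m2.2)%N /\
     m = (m1.1 + m2.1 - (t * l)%N%:Z, (m1.2 + m2.2 - t)%N).
  case h1: (cT m1 m2 m != 0).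
    have [t [ht ->]] := cT_spec _ _ _ h1; exists t; split => //.
    exact: leq_trans ht (leq_addr _ _).
  case h2: (cT m2 m1 m != 0).
    have [t [ht ->]] := cT_spec _ _ _ h2; exists t; rewrite (addrC m2.1) (addnC m2.2); split => //.
    exact: leq_trans ht (leq_addl _ _).
  by move: h; rewrite /br (eqP (negbFE h1)) (eqP (negbFE h2)) subrr eqxx.
subst m.
exists t; split => //; case: t ht h => // _ h.
move: h; rewrite /br cT_val [in X in _ - X](addrC m1.1) [in X in _ - X](addnC m1.2) cT_val.
by rewrite !bin0 !ffK0 subrr eqxx.
Qed.
Lemma br_val m1 m2 :
  br m1 m2 (m1.1 + m2.1 - l%:Z, (m1.2 + m2.2 - 1)%N) =
  m1.2%:R * expK K l m2.1 - m2.2%:R * expK K l m1.1.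
Proof.
have := cT_val m1 m2 1; have := cT_val m2 m1 1; rewrite mul1n !bin1 !ffK1.
by rewrite /br (addrC m2.1) (addnC m2.2) => -> ->.
Qed.
Hypothesis charK : [pchar K] =i pred0.
Lemma natz (F : pzRingType) (n : nat) : (n%:Z)%:~R = n%:R :> F.
Proof. by []. Qed.
Lemma gen_expr (F : fieldType) (i1 i2 : int) (j1 j2 : nat) :
  j1%:R * (i2%:~R / l%:R) - j2%:R * (i1%:~R / l%:R) =
  (j1%:Z * i2 - j2%:Z * i1)%:~R / l%:R :> F.
Proof. by rewrite rmorphB !rmorphM /= !natz; ring. Qed.
Lemma intr_neq0K (z : int) : z != 0 -> z%:~R != 0 :> K.
Proof.
have h := (pcharf0P K).1 charK.
case: z => n hn.
  by rewrite natz h; apply: contra hn => /eqP ->.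
by rewrite NegzE rmorphN /= natz oppr_eq0 h.
Qed.
Lemma lK : l%:R != 0 :> K.
Proof. by rewrite ((pcharf0P K).1 charK) -lt0n. Qed.
Lemma lQ : l%:R != 0 :> rat.
Proof. by rewrite pnatr_eq0 -lt0n. Qed.
Definition A (m : mon) : rat := m.1%:~R / l%:R.
Definition B (m : mon) : rat := m.2%:R.
Definition D m := A m - B m.
Lemma ptAB m : pt l m = (A m, B m). Proof. by []. Qed.
Lemma AB_prod m1 m2 t m : (t <= m1.2 + m2.2)%N ->
  m = (m1.1 + m2.1 - (t * l)%N%:Z, (m1.2 + m2.2 - t)%N) ->
  A m = A m1 + A m2 - t%:R /\ B m = B m1 + B m2 - t%:R.
Proof.
move=> ht ->; split; rewrite /A /B /=.
  rewrite rmorphB rmorphD /= natz natrM; field; exact: lQ.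
by rewrite natrB // natrD.
Qed.
Lemma AB_inj m1 m2 : A m1 = A m2 -> B m1 = B m2 -> m1 = m2.
Proof.
case: m1 m2 => i j [i' j']; rewrite /A /B /= => hA hB.
have : i%:~R = i'%:~R :> rat by move: hA => /(congr1 (fun x => x * l%:R)); rewrite !divfK ?lQ.
move/intr_inj => ->; congr pair; by apply/eqP; rewrite -(eqr_nat rat) hB.
Qed.
Lemma sum_neq0 (r : seq mon) (F : mon -> K) :
  \sum_(x <- r) F x != 0 -> exists2 x, x \in r & F x != 0.
Proof.
case hh: (has (fun x => F x != 0) r); first by move/hasP: hh.
move/hasPn: hh => hh; rewrite big1_seq ?eqxx // => x /andP [_ /hh].
by move/negPn/eqP.
Qed.
Lemma mem_supp (P : Wl K) m : coefW P m != 0 -> m \in undup [seq x.2 | x <- P].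
Proof.
apply: contraR; rewrite mem_undup => hm; rewrite /coefW big1_seq // => x /andP [/eqP e xP].
by move: hm; rewrite -e map_f.
Qed.
Lemma sum_single (r : seq mon) (F : mon -> K) a : uniq r -> a \in r ->
  (forall x, x \in r -> x != a -> F x = 0) -> \sum_(x <- r) F x = F a.
Proof.
move=> ur ar h; rewrite (bigD1_seq a) //= big1_seq ?addr0 // => x /andP [xa xr].
exact: h.
Qed.

Section Gen.
Variables (s : rat) (P Q : Wl K) (mP mQ : mon).
Hypotheses (hs : s != 0) (cP : coefW P mP != 0) (cQ : coefW Q mQ != 0).
Hypothesis HP : forall m, coefW P m != 0 ->
  s * D m < s * D mP \/ (s * D m = s * D mP /\ B m <= B mP).
Hypothesis HQ : forall m, coefW Q m != 0 ->
  s * D m < s * D mQ \/ (s * D m = s * D mQ /\ B m <= B mQ).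

Lemma gen_bound m : coefW (commW l P Q) m != 0 ->
  s * D m < s * (D mP + D mQ) \/ (s * D m = s * (D mP + D mQ) /\ B m <= B mP + B mQ - 1).
Proof.
rewrite coefW_comm => /sum_neq0 [m1 _]; rewrite mulf_eq0 negb_or => /andP [h1 /sum_neq0 [m2 _]].
rewrite mulf_eq0 negb_or => /andP [h2 h3].
have [t [t1 ht e]] := br_spec _ _ _ h3; subst m.
have [eA eB] := AB_prod _ _ _ _ ht erefl.
have t1' : 1 <= t%:R :> rat by rewrite ler1n.
have eD : s * D (m1.1 + m2.1 - (t * l)%N%:Z, (m1.2 + m2.2 - t)%N) = s * D m1 + s * D m2.
  by rewrite /D eA eB /D; ring.
rewrite eD eB; have := HP _ h1; have := HQ _ h2.
have -> : s * (D mP + D mQ) = s * D mP + s * D mQ by ring.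
lra.
Qed.
Hypothesis HA : A mP * B mQ - B mP * A mQ != 0.
Definition mstar : mon := (mP.1 + mQ.1 - l%:Z, (mP.2 + mQ.2 - 1)%N).
Lemma j_pos : (1 <= mP.2 + mQ.2)%N.
Proof.
rewrite lt0n; apply: contra HA; rewrite addn_eq0 => /andP [/eqP h1 /eqP h2].
by rewrite /B h1 h2 !mulr0 mul0r subrr.
Qed.
Lemma mstarE : mstar = (mP.1 + mQ.1 - (1 * l)%N%:Z, (mP.2 + mQ.2 - 1)%N).
Proof. by rewrite mul1n. Qed.
Lemma uniq_pair m1 m2 : coefW P m1 != 0 -> coefW Q m2 != 0 ->
  br m1 m2 mstar != 0 -> m1 = mP /\ m2 = mQ.
Proof.
move=> h1 h2 h3; have [t [t1 ht e]] := br_spec _ _ _ h3.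
have [eA eB] := AB_prod _ _ _ _ ht e.
have [sA sB] := AB_prod _ _ _ _ j_pos mstarE.
have t1' : 1 <= t%:R :> rat by rewrite ler1n.
have := HP _ h1; have := HQ _ h2; rewrite /D => hq hp.
have eD : s * (A m1 - B m1) = s * (A mP - B mP) /\ s * (A m2 - B m2) = s * (A mQ - B mQ).
  have : s * (A m1 - B m1) + s * (A m2 - B m2) = s * (A mP - B mP) + s * (A mQ - B mQ).
    have : A m1 - B m1 + (A m2 - B m2) = A mP - B mP + (A mQ - B mQ) by lra.
    by move=> h; rewrite -!mulrDr h.
  lra.
have [eB1 eB2] : B m1 = B mP /\ B m2 = B mQ by lra.
case: eD => /(mulfI hs) e1 /(mulfI hs) e2.
split; apply: AB_inj => //; lra.
Qed.
Lemma coef_star : coefW (commW l P Q) mstar = coefW P mP * (coefW Q mQ * br mP mQ mstar).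
Proof.
rewrite coefW_comm (sum_single _ _ mP (undup_uniq _) (mem_supp _ _ cP)).
  congr (_ * _); apply: sum_single; [exact: undup_uniq | exact: mem_supp |].
  move=> m2 _ hm2; case: (eqVneq (coefW Q m2) 0) => [->|h2]; first by rewrite mul0r.
  case: (eqVneq (br mP m2 mstar) 0) => [->|h3]; first by rewrite mulr0.
  by have [_ e] := uniq_pair _ _ cP h2 h3; rewrite e eqxx in hm2.
move=> m1 _ hm1; case: (eqVneq (coefW P m1) 0) => [->|h1]; first by rewrite mul0r.
rewrite big1_seq ?mulr0 // => m2 _; case: (eqVneq (coefW Q m2) 0) => [->|h2]; first by rewrite mul0r.
case: (eqVneq (br m1 m2 mstar) 0) => [->|h3]; first by rewrite mulr0.
by have [e _] := uniq_pair _ _ h1 h2 h3; rewrite e eqxx in hm1.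
Qed.
Lemma star_neq0 : coefW (commW l P Q) mstar != 0.
Proof.
rewrite coef_star !mulf_neq0 // /mstar br_val /expK gen_expr.
rewrite mulf_neq0 ?invr_eq0 ?lK // intr_neq0K //.
apply: contra HA => /eqP hz.
have := gen_expr rat mP.1 mQ.1 mP.2 mQ.2; rewrite hz mul0r /A /B => h.
apply/eqP; transitivity (- (mP.2%:R * (mQ.1%:~R / l%:R) - mQ.2%:R * (mP.1%:~R / l%:R)) : rat).
  by ring.
by rewrite h oppr0.
Qed.
End Gen.
End S.
Theorem proposition1p10 (K : fieldType) (l : nat)
  (charK : [pchar K] =i pred0) (l_gt0 : (0 < l)%N)
  (P Q : Wl K) (nzP : ~ zeroW P) (nzQ : ~ zeroW Q) :
  (forall p q, is_w l P p -> is_w l Q q -> ~ aligned p q ->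
     ~ zeroW (commW l P Q) /\
     is_w l (commW l P Q) (subpt (addpt p q) (1, 1))) /\
  (forall p q, is_wbar l P p -> is_wbar l Q q -> ~ aligned p q ->
     ~ zeroW (commW l P Q) /\
     is_wbar l (commW l P Q) (subpt (addpt p q) (1, 1))).
Proof.
split.
- move=> p q [[mP [cP <-]] hp] [[mQ [cQ <-]] hq] hal.
  have HA : A l mP * B mQ - B mP * A l mQ != 0 by apply/eqP; exact: hal.
  have HP : forall m, coefW P m != 0 ->
      1 * D l m < 1 * D l mP \/ (1 * D l m = 1 * D l mP /\ B m <= B mP).
    move=> m cm; have := hp (pt l m) (ex_intro _ m (conj cm erefl)).
    rewrite !ptAB /D /= => /orP [h|/andP [/eqP h1 h2]]; [left; lra | right; split; lra].
  have HQ : forall m, coefW Q m != 0 ->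
      1 * D l m < 1 * D l mQ \/ (1 * D l m = 1 * D l mQ /\ B m <= B mQ).
    move=> m cm; have := hq (pt l m) (ex_intro _ m (conj cm erefl)).
    rewrite !ptAB /D /= => /orP [h|/andP [/eqP h1 h2]]; [left; lra | right; split; lra].
  have hs : (1 : rat) != 0 by [].
  have nz := @star_neq0 K l l_gt0 charK _ _ _ _ _ hs cP cQ HP HQ HA.
  split; first by move=> z; move: nz; rewrite z eqxx.
  split.
    exists (mstar l mP mQ); split => //.
    have [sA sB] := @AB_prod l l_gt0 _ _ _ _ (j_pos _ _ _ HA) (mstarE l mP mQ).
    by rewrite !ptAB sA sB.
  move=> q' [m [cm <-]]; have := @gen_bound K l l_gt0 _ _ _ _ _ HP HQ m cm.
  rewrite !ptAB /D /= => -[h|[h1 h2]]; apply/orP; [left; lra | right; apply/andP; split; [apply/eqP|]; lra].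
- move=> p q [[mP [cP <-]] hp] [[mQ [cQ <-]] hq] hal.
  have HA : A l mP * B mQ - B mP * A l mQ != 0 by apply/eqP; exact: hal.
  have HP : forall m, coefW P m != 0 ->
      -1 * D l m < -1 * D l mP \/ (-1 * D l m = -1 * D l mP /\ B m <= B mP).
    move=> m cm; have := hp (pt l m) (ex_intro _ m (conj cm erefl)).
    rewrite !ptAB /D /= => /orP [h|/andP [/eqP h1 h2]]; [left; lra | right; split; lra].
  have HQ : forall m, coefW Q m != 0 ->
      -1 * D l m < -1 * D l mQ \/ (-1 * D l m = -1 * D l mQ /\ B m <= B mQ).
    move=> m cm; have := hq (pt l m) (ex_intro _ m (conj cm erefl)).
    rewrite !ptAB /D /= => /orP [h|/andP [/eqP h1 h2]]; [left; lra | right; split; lra].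
  have hs : (-1 : rat) != 0 by [].
  have nz := @star_neq0 K l l_gt0 charK _ _ _ _ _ hs cP cQ HP HQ HA.
  split; first by move=> z; move: nz; rewrite z eqxx.
  split.
    exists (mstar l mP mQ); split => //.
    have [sA sB] := @AB_prod l l_gt0 _ _ _ _ (j_pos _ _ _ HA) (mstarE l mP mQ).
    by rewrite !ptAB sA sB.
  move=> q' [m [cm <-]]; have := @gen_bound K l l_gt0 _ _ _ _ _ HP HQ m cm.
  rewrite !ptAB /D /= => -[h|[h1 h2]]; apply/orP; [left; lra | right; apply/andP; split; [apply/eqP|]; lra].
Qed.
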